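(* At every moment during the execution of Greedy Dual on any MPMD or MBPMD instance, the following hold. (i) Every active set $S$ contains exactly $\mathrm{sur}(S)$ free (unmatched) requests. (ii) The family of all sets that are active or inactive at that moment is laminar.
   Context: Problem (MPMD / MBPMD). Let $(\mathcal{X},\mathrm{dist})$ be a metric space. An instance consists of $2m$ requests $u_1,\dots,u_{2m}$. Each request $u$ is a triple $(\mathrm{pos}(u),\mathrm{atime}(u),\mathrm{sgn}(u))$, where $\mathrm{pos}(u)\in\mathcal{X}$ is its location and $\mathrm{atime}(u)\ge0$ is its arrival time, with arrival times nondecreasing. In MPMD, $\mathrm{sgn}(u)=0$ for all requests. In MBPMD, exactly $m$ requests have sign $+1$ and $m$ have sign $-1$. At time $\tau$, an algorithm may match two arrived, unmatched requests $u,v$ with $\mathrm{sgn}(u)=-\mathrm{sgn}(v)$, at cost $\mathrm{dist}(\mathrm{pos}(u),\mathrm{pos}(v))$ (connection cost) plus $(\tau-\mathrm{atime}(u))+(\tau-\mathrm{atime}(v))$ (waiting costs). All requests must eventually be matched. Notation. Edges are unordered pairs $\{u,v\}$ of distinct requests with $\mathrm{sgn}(u)=-\mathrm{sgn}(v)$. For a set $S$ of requests, $\delta(S)$ is the set of edges with exactly one endpoint in $S$. In MPMD, $\mathrm{sur}(S)=|S|\bmod 2$; in MBPMD, $\mathrm{sur}(S)=|\sum_{u\in S}\mathrm{sgn}(u)|$. For an edge $e=(u,v)$, $\mathrm{cost}(e)=\mathrm{dist}(\mathrm{pos}(u),\mathrm{pos}(v))+|\mathrm{atime}(u)-\mathrm{atime}(v)|$.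 Algorithm Greedy Dual (GD). GD maintains a dual variable $y_S\ge0$ for every set $S$ of already-arrived requests; $y_S(\tau)$ denotes its value at time $\tau$. It also maintains a partition of the arrived requests into active sets, with $\mathcal{A}(u)$ denoting the active set containing $u$. An active set is growing if it contains at least one free request, and non-growing otherwise. - When a request $u$ arrives, $\mathcal{A}(u)\leftarrow\{u\}$ becomes a new active set, and $y_S\leftarrow 0$ for every new set $S$ containing $u$. - Tight-constraint event: while there is an edge $e=(u,v)$ between arrived requests with $\mathcal{A}(u)\neq\mathcal{A}(v)$ and $\sum_{S:\,e\in\delta(S)}y_S=\mathrm{cost}(e)$, GD does the following. It merges the two sets: $S=\mathcal{A}(u)\cup\mathcal{A}(v)$ becomes active and $\mathcal{A}(w)\leftarrow S$ for all $w\in S$, while $\mathcal{A}(u)$ and $\mathcal{A}(v)$ become inactive. It marks the edge $e$. Then, while there are free $u',v'\in S$ with $\mathrm{sgn}(u')=-\mathrm{sgn}(v')$, it matches $u'$ with $v'$ at the current time. - At all other times, $y_S$ increases continuously at rate $1$ (the same rate as time) for every active growing set $S$; all other dual variables stay constant. *)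

(* Defs.v *)
(* Model of the Greedy Dual (GD) algorithm for MPMD / MBPMD
   as a nondeterministic transition system; reachable states = all moments of
   any execution of GD (all tie-breaking choices allowed). *)
From HB Require Import structures.
From mathcomp Require Import all_boot all_order all_algebra.
Set Implicit Arguments. Unset Strict Implicit. Unset Printing Implicit Defensive.
Import Order.TTheory GRing.Theory Num.Theory.
Local Open Scope ring_scope.

Record metric (R : realFieldType) (X : Type) := Metric {
  dist : X -> X -> R;
  dist_self : forall x, dist x x = 0;
  dist_eq0 : forall x y, dist x y = 0 -> x = y;
  dist_sym : forall x y, dist x y = dist y x;
  dist_tri : forall x y z, dist x z <= dist x y + dist y z }.

(* An instance with 2m requests, indexed 'I_(2m) in arrival order. *)
Record instance (R : realFieldType) (X : Type) (m : nat) := Instance {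
  pos : 'I_(2 * m) -> X;
  atime : 'I_(2 * m) -> R;
  sgn : 'I_(2 * m) -> int }.

Section GD.
Variables (R : realFieldType) (X : Type) (m : nat).
Variables (M : metric R X) (I : instance R X m).
Local Notation Req := ('I_(2 * m)).

(* bip = false : MPMD;  bip = true : MBPMD *)
Definition valid_instance (bip : bool) : Prop :=
  (forall i, 0 <= atime I i) /\
  (forall i j : Req, (i <= j)%N -> atime I i <= atime I j) /\
  (if bip then
     (forall i, sgn I i = 1 \/ sgn I i = -1) /\
     #|[set i | sgn I i == 1]| = m /\ #|[set i | sgn I i == -1]| = m
   else forall i, sgn I i = 0).

Definition sur (bip : bool) (S : {set Req}) : nat :=
  if bip then absz (\sum_(u in S) sgn I u)%R else (#|S| %% 2)%N.

Definition is_edge (u v : Req) : bool := (u != v) && (sgn I u == - sgn I v).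

Definition cost (u v : Req) : R :=
  dist M (pos I u) (pos I v) + `|atime I u - atime I v|.

Definition crossing (y : {set Req} -> R) (u v : Req) : R :=
  \sum_(S : {set Req} | (u \in S) != (v \in S)) y S.

Record gd_state := GDState {
  st_now : R;
  st_arrived : {set Req};
  st_free : {set Req};
  st_active : {set {set Req}};
  st_inactive : {set {set Req}};
  st_dual : {set Req} -> R }.

Definition init_state : gd_state :=
  GDState 0 set0 set0 set0 set0 (fun _ => 0).

Definition growing (s : gd_state) (S : {set Req}) : bool :=
  (S \in st_active s) && (S :&: st_free s != set0).

Definition dual_at (s : gd_state) (t : R) (S : {set Req}) : R :=
  st_dual s S + (if growing s S then t - st_now s else 0).

(* free set after greedily matching inside S: F' is the result of repeatedly
   matching free opposite-sign pairs in S until none remain *)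
Definition greedy_match_result (F F' S : {set Req}) : Prop :=
  F' \subset F /\ F :\: F' \subset S /\
  (exists p : Req -> Req, forall x, x \in F :\: F' ->
     [/\ p x \in F :\: F', p x != x, p (p x) = x & sgn I (p x) = - sgn I x]) /\
  (forall w1 w2, w1 \in S :&: F' -> w2 \in S :&: F' -> ~~ is_edge w1 w2).

Inductive gd_step : gd_state -> gd_state -> Prop :=
| step_arrive s u :
    u \notin st_arrived s ->
    (forall v : Req, (v < u)%N -> v \in st_arrived s) ->
    atime I u = st_now s ->
    gd_step s (GDState (st_now s) (u |: st_arrived s) (u |: st_free s)
                 ([set u] |: st_active s) (st_inactive s)
                 (fun S => if (u \in S) && (S \subset u |: st_arrived s)
                           then 0 else st_dual s S))
| step_tight s u v S1 S2 F' :
    u \in st_arrived s -> v \in st_arrived s -> is_edge u v ->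
    S1 \in st_active s -> S2 \in st_active s -> S1 != S2 ->
    u \in S1 -> v \in S2 ->
    crossing (st_dual s) u v = cost u v ->
    greedy_match_result (st_free s) F' (S1 :|: S2) ->
    gd_step s (GDState (st_now s) (st_arrived s) F'
                 ((S1 :|: S2) |: ((st_active s :\ S1) :\ S2))
                 (S1 |: (S2 |: st_inactive s)) (st_dual s))
| step_time s t :
    st_now s < t ->
    (forall v, v \notin st_arrived s -> t <= atime I v) ->
    (forall u v S1 S2, u \in st_arrived s -> v \in st_arrived s -> is_edge u v ->
       S1 \in st_active s -> S2 \in st_active s -> S1 != S2 -> u \in S1 -> v \in S2 ->
       crossing (st_dual s) u v != cost u v) ->
    (* duals of active growing sets grow at rate 1 while staying feasible *)
    (forall tau u v S1 S2, st_now s < tau <= t ->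
       u \in st_arrived s -> v \in st_arrived s -> is_edge u v ->
       S1 \in st_active s -> S2 \in st_active s -> S1 != S2 -> u \in S1 -> v \in S2 ->
       crossing (dual_at s tau) u v <= cost u v) ->
    gd_step s (GDState t (st_arrived s) (st_free s) (st_active s) (st_inactive s)
                 (dual_at s t)).

Inductive reachable : gd_state -> Prop :=
| reach_init : reachable init_state
| reach_step s s' : reachable s -> gd_step s s' -> reachable s'.

End GD.

Definition laminar (T : finType) (F : {set {set T}}) : Prop :=
  forall A B, A \in F -> B \in F ->
    A \subset B \/ B \subset A \/ [disjoint A & B].

(* Main.v *)
Require Import Defs.
From HB Require Import structures.
From mathcomp Require Import all_boot all_order all_algebra.
From mathcomp Require Import zify.
Set Implicit Arguments. Unset Strict Implicit. Unset Printing Implicit Defensive.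
Import Order.TTheory GRing.Theory Num.Theory.

Lemma disjP (T : finType) (A B : {set T}) :
  [disjoint A & B] <-> (forall x, x \in A -> x \in B -> False).
Proof.
rewrite -setI_eq0; split.
  move/eqP=> H x xA xB. have: x \in A :&: B by rewrite inE xA xB.
  by rewrite H inE.
move=> H; apply/eqP/setP=> x; rewrite !inE; apply/negbTE/negP=> /andP[]; exact: H.
Qed.

Lemma big_disjU (T : finType) (Rt : Type) (idx : Rt) (op : Monoid.com_law idx)
  (A B : {set T}) (F : T -> Rt) : [disjoint A & B] ->
  \big[op/idx]_(i in A :|: B) F i = op (\big[op/idx]_(i in A) F i) (\big[op/idx]_(i in B) F i).
Proof. move=> d; rewrite -bigU //; apply: eq_bigl => i; by rewrite inE. Qed.

Lemma card_disjU (T : finType) (A B : {set T}) : [disjoint A & B] ->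
  #|A :|: B| = (#|A| + #|B|)%N.
Proof. move=> d; by rewrite -!sum1_card big_disjU. Qed.

Lemma invol_facts (n : nat) (D : {set 'I_n}) (p : 'I_n -> 'I_n) (g : 'I_n -> int) :
  (forall x, x \in D -> [/\ p x \in D, p x != x, p (p x) = x & g (p x) = - g x]%R) ->
  (\sum_(x in D) g x = 0)%R /\ (#|D| %% 2 = 0)%N.
Proof.
move=> H.
pose q (x : 'I_n) := if x \in D then p x else x.
have qq : cancel q q.
  move=> x; rewrite /q; case: (boolP (x \in D)) => xD.
    by have [-> _ -> _] := H x xD.
  by rewrite (negbTE xD).
have qinj : injective q := can_inj qq.
have qD : forall x, (q x \in D) = (x \in D).
  move=> x; rewrite /q; case: (boolP (x \in D)) => xD.
    by have [-> _ _ _] := H x xD.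
  by rewrite (negbTE xD).
split.
  have E : (\sum_(x in D) g x = \sum_(x in D) g (q x))%R.
    rewrite (reindex_inj qinj); apply: eq_bigl => x; by rewrite qD.
  have E2 : (\sum_(x in D) g (q x) = - \sum_(x in D) g x)%R.
    rewrite -sumrN; apply: eq_bigr => x xD; rewrite /q xD.
    by have [_ _ _ ->] := H x xD.
  move: E; rewrite E2 => E; lia.
have E : (\sum_(x in D) ((x < q x)%N : nat) = \sum_(x in D) ((q x < x)%N : nat))%N.
  rewrite (reindex_inj qinj); apply: eq_big => x; first by rewrite qD.
  by rewrite qq.
have E2 : (#|D| = \sum_(x in D) ((x < q x)%N : nat) + \sum_(x in D) ((q x < x)%N : nat))%N.
  rewrite -sum1_card -big_split /=; apply: eq_bigr => x xD.
  have [_ ne _ _] := H x xD. rewrite /q xD.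
  have : (nat_of_ord (p x) != nat_of_ord x) by [].
  by case: ltngtP.
rewrite E2 E; lia.
Qed.

Definition Inv (R : realFieldType) (X : Type) (m : nat) (I : instance R X m)
  (s : gd_state R m) : Prop :=
  [/\ (forall S, S \in st_active s :|: st_inactive s -> S \subset st_arrived s),
      (forall S T, S \in st_active s -> T \in st_active s -> S != T -> [disjoint S & T]),
      (forall B S, B \in st_active s :|: st_inactive s -> S \in st_active s ->
          B \subset S \/ [disjoint B & S]),
      laminar (st_active s :|: st_inactive s) &
      (forall S, S \in st_active s ->
         [/\ (\sum_(x in S :\: st_free s) sgn I x = 0)%R,
             (#|S :\: st_free s| %% 2 = 0)%N &
             (forall w1 w2, w1 \in S :&: st_free s -> w2 \in S :&: st_free s ->
                ~~ is_edge I w1 w2)])].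

Lemma inv_init (R : realFieldType) (X : Type) (m : nat) (I : instance R X m) :
  Inv I (init_state R m).
Proof.
split=> //=; rewrite ?setU0.
- by move=> S; rewrite in_set0.
- by move=> S T; rewrite in_set0.
- by move=> B S; rewrite in_set0.
- by move=> A B; rewrite in_set0.
- by move=> S; rewrite in_set0.
Qed.

Lemma inv_final (R : realFieldType) (X : Type) (m : nat) (I : instance R X m) (bip : bool)
  (s : gd_state R m) : valid_instance I bip -> Inv I s ->
    (forall S, S \in st_active s -> #|S :&: st_free s| = sur I bip S) /\
    laminar (st_active s :|: st_inactive s).
Proof.
move=> [_ [_ Hsg]] [_ _ _ Hlam Hf]; split=> // S SA.
have [h0 h1 h2] := Hf S SA.
rewrite /sur; case: bip Hsg => Hsg.
  have [Hpm _] := Hsg.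
  rewrite (big_setID (st_free s)) /= h0 GRing.addr0.
  case: (set_0Vmem (S :&: st_free s)) => [->|[w wS]].
    by rewrite big_set0 cards0.
  have E : forall x, x \in S :&: st_free s -> sgn I x = sgn I w.
    move=> x xS; have := h2 x w xS wS; rewrite /is_edge.
    case: (x =P w) => [->//|ne] /= H.
    have H' : sgn I x <> (- sgn I w)%R by move=> e; move: H; rewrite e eqxx.
    by case: (Hpm x) => ex; case: (Hpm w) => ew; rewrite ex ew ?opprK in H' *.
  rewrite (eq_bigr (fun _ => sgn I w)) // GRing.sumr_const.
  by case: (Hpm w) => ->; rewrite ?mulNrn ?abszN natz.
rewrite -(cardsID (st_free s) S).
have : (#|S :&: st_free s| <= 1)%N.
  apply/card_le1_eqP => x y xS yS; apply/eqP; apply: negbNE; apply/negP => ne.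
  have := h2 x y xS yS; rewrite /is_edge eq_sym ne /= !Hsg; done.
lia.
Qed.

Lemma inv_arrive (R : realFieldType) (X : Type) (m : nat) (I : instance R X m)
  (s : gd_state R m) (u : 'I_(2 * m)) d :
  Inv I s -> u \notin st_arrived s ->
  Inv I (GDState (st_now s) (u |: st_arrived s) (u |: st_free s)
                 ([set u] |: st_active s) (st_inactive s) d).
Proof.
case=> Hsub Hdisj Hmax Hlam Hf uA.
have uS : forall S, S \in st_active s :|: st_inactive s -> u \notin S.
  move=> S /Hsub /subsetP H; apply/negP => /H; by rewrite (negbTE uA).
have famE : forall S, S \in ([set u] |: st_active s) :|: st_inactive s ->
    S = [set u] \/ S \in st_active s :|: st_inactive s.
  move=> S; rewrite in_setU in_setU1 -orbA => /orP[/eqP->|H]; [by left|right].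
  by rewrite in_setU.
have actE : forall S, S \in [set u] |: st_active s -> S = [set u] \/ S \in st_active s.
  by move=> S /setU1P.
have actI : forall S, S \in st_active s -> S \in st_active s :|: st_inactive s.
  by move=> S SA; rewrite in_setU SA.
have du : forall S, S \in st_active s :|: st_inactive s -> [disjoint [set u] & S].
  move=> S SF; apply/disjP => x; rewrite inE => /eqP -> uS'.
  by move: (uS S SF); rewrite uS'.
split=> /=.
- move=> S /famE [->|SF].
    by apply/subsetP => x; rewrite inE => /eqP ->; rewrite setU11.
  exact: subset_trans (Hsub _ SF) (subsetUr _ _).
- move=> S T /actE [->|SA] /actE [->|TA]; rewrite ?eqxx //.
  + by move=> _; apply: du; apply: actI.
  + by move=> _; rewrite disjoint_sym; apply: du; apply: actI.
  + exact: Hdisj.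
- move=> B S /famE [->|BF] /actE [->|SA].
  + by left.
  + by right; apply: du; apply: actI.
  + by right; rewrite disjoint_sym; apply: du.
  + exact: Hmax.
- move=> A B /famE [->|AF] /famE [->|BF].
  + by left.
  + by right; right; apply: du.
  + by right; right; rewrite disjoint_sym; apply: du.
  + exact: Hlam.
- move=> S /actE [->|SA].
  + have -> : [set u] :\: (u |: st_free s) = set0.
      by apply/setP => x; rewrite !inE; case: (x == u); rewrite ?andbF.
    rewrite big1 ?cards0 => [|x]; last by rewrite in_set0.
    split=> // w1 w2.
    rewrite !inE => /andP[/eqP -> _] /andP[/eqP -> _].
    by rewrite /is_edge eqxx.
  + have uS' := uS S (actI S SA).
    have E1 : S :\: (u |: st_free s) = S :\: st_free s.
      apply/setP => x; rewrite !inE; case: (x =P u) => [->|] //=.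
      by rewrite (negbTE uS') andbF.
    have E2 : S :&: (u |: st_free s) = S :&: st_free s.
      apply/setP => x; rewrite !inE; case: (x =P u) => [->|] //=.
      by rewrite (negbTE uS').
    by rewrite E1 E2; apply: Hf.
Qed.

Lemma inv_tight (R : realFieldType) (X : Type) (m : nat) (I : instance R X m)
  (s : gd_state R m) (u v : 'I_(2 * m)) S1 S2 F' :
  Inv I s -> S1 \in st_active s -> S2 \in st_active s -> S1 != S2 ->
  greedy_match_result I (st_free s) F' (S1 :|: S2) ->
  Inv I (GDState (st_now s) (st_arrived s) F'
                 ((S1 :|: S2) |: ((st_active s :\ S1) :\ S2))
                 (S1 |: (S2 |: st_inactive s)) (st_dual s)).
Proof.
case=> Hsub Hdisj Hmax Hlam Hf S1A S2A ne12 [F'F [DS [[p Hp] Hne]]].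
set S := S1 :|: S2.
set F := st_free s.
have d12 := Hdisj _ _ S1A S2A ne12.
have actI : forall T, T \in st_active s -> T \in st_active s :|: st_inactive s.
  by move=> T TA; rewrite in_setU TA.
have actE : forall T, T \in S |: ((st_active s :\ S1) :\ S2) ->
    T = S \/ [/\ T \in st_active s, T != S1 & T != S2].
  move=> T; rewrite in_setU1 => /orP[/eqP->|]; first by left.
  by rewrite !inE => /andP[a /andP[b c]]; right; split.
have famE : forall T, T \in (S |: ((st_active s :\ S1) :\ S2)) :|: (S1 |: (S2 |: st_inactive s)) ->
    T = S \/ T \in st_active s :|: st_inactive s.
  move=> T; rewrite in_setU in_setU1 => /orP[/orP[/eqP->|H]|H]; first by left.
    by right; move: H; rewrite !inE => /andP[_ /andP[_ ->]].
  right; move: H; rewrite !inE => /orP[/eqP->|/orP[/eqP->|->]];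
    by rewrite ?S1A ?S2A ?orbT.
have dS : forall T, T \in st_active s -> T != S1 -> T != S2 -> [disjoint T & S].
  move=> T TA n1 n2; apply/disjP => x xT; rewrite inE => /orP[] xS.
    by move/disjP: (Hdisj _ _ TA S1A n1) => H; exact: H x xT xS.
  by move/disjP: (Hdisj _ _ TA S2A n2) => H; exact: H x xT xS.
have key : forall B, B \in st_active s :|: st_inactive s -> B \subset S \/ [disjoint B & S].
  move=> B BF.
  case: (Hmax _ _ BF S1A) => [H1|H1].
    by left; apply: subset_trans H1 (subsetUl _ _).
  case: (Hmax _ _ BF S2A) => [H2|H2].
    by left; apply: subset_trans H2 (subsetUr _ _).
  right; apply/disjP => x xB; rewrite inE => /orP[] xS.
    by move/disjP: H1 => H; exact: H x xB xS.
  by move/disjP: H2 => H; exact: H x xB xS.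
split=> /=.
- move=> T /famE [->|TF]; last exact: Hsub.
  by rewrite subUset !Hsub ?actI.
- move=> T U /actE [->|[TA n1 n2]] /actE [->|[UA m1 m2]]; rewrite ?eqxx //.
  + by move=> _; rewrite disjoint_sym; apply: dS.
  + by move=> _; apply: dS.
  + exact: Hdisj.
- move=> B T /famE [->|BF] /actE [->|[TA n1 n2]].
  + by left.
  + by right; rewrite disjoint_sym; apply: dS.
  + exact: key.
  + exact: Hmax.
- move=> A B /famE [->|AF] /famE [->|BF].
  + by left.
  + case: (key B BF) => H; [by right; left | by right; right; rewrite disjoint_sym].
  + case: (key A AF) => H; [by left | by right; right].
  + exact: Hlam.
- move=> T /actE [->|[TA n1 n2]]; last first.
    have dT := dS T TA n1 n2.
    have E : forall x, x \in T -> (x \in F') = (x \in F).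
      move=> x xT; apply/idP/idP => [/(subsetP F'F)//|xF].
      apply/negPn/negP => xF'.
      have : x \in S by apply: (subsetP DS); rewrite inE xF xF'.
      by move/disjP: dT => H /(H x xT).
    have E1 : T :\: F' = T :\: F.
      apply/setP => x; rewrite !inE; case xT: (x \in T); last by rewrite !andbF.
      by rewrite (E x xT).
    have E2 : T :&: F' = T :&: F.
      apply/setP => x; rewrite !inE; case xT: (x \in T) => //.
      by rewrite (E x xT).
    by rewrite E1 E2; apply: Hf.
  have Edec : S :\: F' = ((S1 :\: F) :|: (S2 :\: F)) :|: (F :\: F').
    apply/setP => x.
    have h1 : (x \in F') ==> (x \in F) by apply/implyP => /(subsetP F'F).
    have h2 : (x \in F :\: F') ==> (x \in S) by apply/implyP => /(subsetP DS).
    move: h1 h2; rewrite /S !inE.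
    by case: (x \in F'); case: (x \in F); case: (x \in S1); case: (x \in S2).
  have dA : [disjoint S1 :\: F & S2 :\: F].
    apply/disjP => x; rewrite !inE => /andP[_ a] /andP[_ b].
    by move/disjP: d12 => H; exact: H x a b.
  have dB : [disjoint (S1 :\: F) :|: (S2 :\: F) & F :\: F'].
    apply/disjP => x; rewrite !inE => /orP[/andP[nf _]|/andP[nf _]] /andP[_ xf];
      by rewrite xf in nf.
  have [a1 b1 _] := Hf S1 S1A.
  have [a2 b2 _] := Hf S2 S2A.
  have [iD cD] := invol_facts Hp.
  split; last exact: Hne.
  + by rewrite Edec !big_disjU // -/F a1 a2 iD.
  + rewrite Edec !card_disjU //; move: b1 b2 cD; rewrite -/F; lia.
Qed.

Lemma inv_step (R : realFieldType) (X : Type) (m : nat) (M : metric R X)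
  (I : instance R X m) (s s' : gd_state R m) :
  Inv I s -> gd_step M I s s' -> Inv I s'.
Proof.
move=> Hi st; case: st Hi.
- by move=> s0 u uA _ _ Hi; apply: inv_arrive.
- by move=> s0 u v S1 S2 F' _ _ _ S1A S2A ne _ _ _ gm Hi; apply: inv_tight.
- by move=> s0 t _ _ _ _ [].
Qed.

Theorem mainTheorem2 (R : realFieldType) (X : Type) (m : nat)
  (M : metric R X) (I : instance R X m) (bip : bool) :
  valid_instance I bip ->
  forall s : gd_state R m, reachable M I s ->
    (forall S, S \in st_active s -> #|S :&: st_free s| = sur I bip S) /\
    laminar (st_active s :|: st_inactive s).
Proof.
move=> Hv s Hr; apply: inv_final => //.
elim: Hr => [|s0 s1 _ IH st]; first exact: inv_init.
exact: inv_step IH st.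
Qed.
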